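(* Let $L\ge 6$ be even and let $0\le\ell_1,\ell_2\le L$ be integers. The perimeter of the rhombus $\mathcal{R}_{\ell_1,\ell_2}$ (with any reference site) on the $L\times L$ toric grid graph satisfies $$P(\mathcal{R}_{\ell_1,\ell_2})=4\times\begin{cases}\ell_1+\ell_2+1 & \text{if } \min\{\ell_1,\ell_2\}<L/2 \text{ and } \max\{\ell_1,\ell_2\}<L,\\ 2L-(\ell_1+\ell_2+1) & \text{if } \min\{\ell_1,\ell_2\}\ge L/2 \text{ and } \max\{\ell_1,\ell_2\}<L,\\ L & \text{if } \min\{\ell_1,\ell_2\}<L/2 \text{ and } \max\{\ell_1,\ell_2\}=L,\\ 0 & \text{if } \min\{\ell_1,\ell_2\}\ge L/2 \text{ and } \max\{\ell_1,\ell_2\}=L.\end{cases}$$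
   Context: $L\ge 6$ is even and $\Lambda=(V,E)$ is the $L\times L$ toric grid graph: $V=\{0,\dots,L-1\}^2$, two sites adjacent iff they differ by $\pm1$ mod $L$ in exactly one coordinate; coordinates are taken mod $L$. Sites are even/odd according to the parity of the coordinate sum; $V_{\mathrm{e}},V_{\mathrm{o}}$ denote even/odd sites. For $S\subseteq V$, $\partial^+S$ is the set of sites outside $S$ adjacent to $S$, and $\nabla S$ is the set of edges joining a site of $S$ to a site of $\partial^+ S$; the perimeter of $S$ is $P(S)=|\nabla S|$. Rhombi: for $\eta=(\eta_1,\eta_2)\in V_{\mathrm{o}}$ and positive $\ell_1,\ell_2\le L$, $\mathcal{R}_{\ell_1,\ell_2}(\eta)=S\cup\partial^+S$ with $S=\{(\eta_1+k+j,\eta_2+k-j):0\le k\le\ell_1-1,\ 0\le j\le \ell_2-1\}$. Degenerate rhombi (when $\ell_1\ell_2=0$) have a reference site $\eta\in V_{\mathrm{e}}$ and are sets of even sites: $\mathcal{R}_{0,\ell_2}(\eta)=\{(\eta_1+j,\eta_2-j):0\le j\le \ell_2\}$ for $\ell_2\neq0$, $\mathcal{R}_{\ell_1,0}(\eta)=\{(\eta_1+k,\eta_2+k):0\le k\le\ell_1\}$ for $\ell_1\ne0$, and $\mathcal{R}_{0,0}(\eta)=\{\eta\}$. *)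

(* Defs.v *)
From mathcomp Require Import all_boot.
Set Implicit Arguments. Unset Strict Implicit. Unset Printing Implicit Defensive.

Definition site (L : nat) := ('I_L * 'I_L)%type.

Definition adj (L : nat) (x y : site L) : bool :=
  ((x.1 == y.1 :> nat) &&
     (((y.2 : nat) == (x.2 + 1) %% L) || ((x.2 : nat) == (y.2 + 1) %% L)))
  || ((x.2 == y.2 :> nat) &&
     (((y.1 : nat) == (x.1 + 1) %% L) || ((x.1 : nat) == (y.1 + 1) %% L))).

Definition is_even_site (L : nat) (x : site L) : bool := ~~ odd (x.1 + x.2).
Definition is_odd_site (L : nat) (x : site L) : bool := odd (x.1 + x.2).

Definition bdry (L : nat) (S : {set site L}) : {set site L} :=
  [set y | (y \notin S) && [exists x in S, adj x y]].

Definition perim (L : nat) (S : {set site L}) : nat :=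
  #|[set p : site L * site L | (p.1 \in S) && (p.2 \in bdry S) && adj p.1 p.2]|.

Definition rhombus_core (L l1 l2 : nat) (eta : site L) : {set site L} :=
  [set x : site L | [exists k : 'I_l1, exists j : 'I_l2,
      ((x.1 : nat) == (eta.1 + k + j) %% L) &&
      ((x.2 : nat) == (eta.2 + k + (L - j)) %% L)]].

Definition rhombus (L l1 l2 : nat) (eta : site L) : {set site L} :=
  if (0 < l1) && (0 < l2) then
    rhombus_core l1 l2 eta :|: bdry (rhombus_core l1 l2 eta)
  else if 0 < l2 then
    [set x : site L | [exists j : 'I_l2.+1,
       ((x.1 : nat) == (eta.1 + j) %% L) && ((x.2 : nat) == (eta.2 + (L - j)) %% L)]]
  else if 0 < l1 then
    [set x : site L | [exists k : 'I_l1.+1,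
       ((x.1 : nat) == (eta.1 + k) %% L) && ((x.2 : nat) == (eta.2 + k) %% L)]]
  else [set eta].

(* Main.v *)
Require Import Defs.
From mathcomp Require Import all_boot zify.
From Stdlib Require Import Btauto.
Set Implicit Arguments. Unset Strict Implicit. Unset Printing Implicit Defensive.

Section Torus.
Variable L : nat.
Hypothesis L3 : 3 <= L.
Hypothesis Lev : ~~ odd L.

Lemma Lpos : 0 < L. Proof. lia. Qed.

Lemma modL4 X : X < 4 * L -> (X %% L = X /\ X < L) \/ (X %% L = X - L /\ L <= X < 2 * L)
  \/ (X %% L = X - 2 * L /\ 2 * L <= X < 3 * L) \/ (X %% L = X - 3 * L /\ 3 * L <= X).
Proof.
move=> hX.
have e y k : y < L -> (y + k * L) %% L = y by move=> hy; rewrite addnC modnMDl modn_small.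
case: (ltnP X L) => h0; first by left; rewrite modn_small.
case: (ltnP X (2 * L)) => h1.
  by right; left; rewrite {1}(_ : X = (X - L) + 1 * L) ?e; lia.
case: (ltnP X (3 * L)) => h2.
  by right; right; left; rewrite {1}(_ : X = (X - 2 * L) + 2 * L) ?e; lia.
by right; right; right; rewrite {1}(_ : X = (X - 3 * L) + 3 * L) ?e; lia.
Qed.

Lemma modL2 X : X < 2 * L -> (X %% L = X /\ X < L) \/ (X %% L = X - L /\ L <= X).
Proof. move=> h; have := @modL4 X; lia. Qed.

Lemma modL3 X : X < 3 * L -> (X %% L = X /\ X < L) \/ (X %% L = X - L /\ L <= X < 2 * L)
  \/ (X %% L = X - 2 * L /\ 2 * L <= X).
Proof. move=> h; have := @modL4 X; lia. Qed.

Ltac elim_mods := repeat match goal with |- context [?X %% L] =>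
  lazymatch X with context [_ %% L] => fail | _ => idtac end;
  first [ rewrite (@modn_small X L); last by lia
        | case: (@modL2 X ltac:(lia)) => [[-> ?]|[-> ?]]
        | case: (@modL3 X ltac:(lia)) => [[-> ?]|[[-> ?]|[-> ?]]]
        | case: (@modL4 X ltac:(lia)) => [[-> ?]|[[-> ?]|[[-> ?]|[-> ?]]]] ] end.

Definition mk (a b : nat) : site L := (Ordinal (ltn_pmod a Lpos), Ordinal (ltn_pmod b Lpos)).

Lemma site_eqP (x y : site L) : x = y <-> (x.1 : nat) = y.1 /\ (x.2 : nat) = y.2.
Proof.
split=> [->//|[h1 h2]]; case: x y h1 h2 => [a b] [c d] /= h1 h2.
by rewrite (val_inj h1) (val_inj h2).
Qed.

Lemma eq_mk (y : site L) a b : (y == mk a b) = ((y.1 : nat) == a %% L) && ((y.2 : nat) == b %% L).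
Proof.
apply/eqP/andP => [->//|[/eqP h1 /eqP h2]]; exact/site_eqP.
Qed.

Definition nb1 (x : site L) := mk (x.1 + 1) x.2.
Definition nb2 (x : site L) := mk (x.1 + (L - 1)) x.2.
Definition nb3 (x : site L) := mk x.1 (x.2 + 1).
Definition nb4 (x : site L) := mk x.1 (x.2 + (L - 1)).

Lemma keyP a b : a < L -> b < L -> (a == (b + 1) %% L) = (b == (a + (L - 1)) %% L).
Proof. move=> ha hb; elim_mods; lia. Qed.

Lemma adjE (x y : site L) : adj x y = (y \in nb1 x |: (nb2 x |: (nb3 x |: [set nb4 x]))).

Proof.
rewrite !inE !eq_mk /adj /= (modn_small (ltn_ord x.2)) (modn_small (ltn_ord x.1)).
rewrite (keyP (ltn_ord x.2) (ltn_ord y.2)) (keyP (ltn_ord x.1) (ltn_ord y.1)).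
rewrite [(x.1 : nat) == y.1]eq_sym [(x.2 : nat) == y.2]eq_sym.
btauto.
Qed.

Lemma adjC (x y : site L) : adj x y = adj y x.
Proof.
rewrite /adj [(y.1 : nat) == x.1]eq_sym [(y.2 : nat) == x.2]eq_sym.
btauto.
Qed.

Lemma card_nb (x : site L) : #|[set y | adj x y]| = 4.
Proof.
rewrite (_ : [set y | adj x y] = nb1 x |: (nb2 x |: (nb3 x |: [set nb4 x]))); last first.
  by apply/setP=> y; rewrite inE adjE !inE; btauto.
have h1 := ltn_ord x.1; have h2 := ltn_ord x.2.
have d12 : (nb1 x == nb2 x) = false by rewrite eq_mk /=; apply/negbTE/nandP; left; elim_mods; lia.
have d13 : (nb1 x == nb3 x) = false by rewrite eq_mk /=; apply/negbTE/nandP; left; elim_mods; lia.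
have d14 : (nb1 x == nb4 x) = false by rewrite eq_mk /=; apply/negbTE/nandP; left; elim_mods; lia.
have d23 : (nb2 x == nb3 x) = false by rewrite eq_mk /=; apply/negbTE/nandP; left; elim_mods; lia.
have d24 : (nb2 x == nb4 x) = false by rewrite eq_mk /=; apply/negbTE/nandP; left; elim_mods; lia.
have d34 : (nb3 x == nb4 x) = false by rewrite eq_mk /=; apply/negbTE/nandP; right; elim_mods; lia.
by rewrite !cardsU1 cards1 !inE d12 d13 d14 d23 d24 d34.
Qed.

Definition par (x : site L) := odd (x.1 + x.2).

Lemma par_adj (x y : site L) : adj x y -> par y = ~~ par x.
Proof.
have h1 := ltn_ord x.1; have h2 := ltn_ord x.2.
rewrite adjE !inE /par => /or4P[] /eqP -> /=; elim_mods; lia.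
Qed.


Lemma card_sum (T : finType) (P : pred T) : #|[set x | P x]| = \sum_x (P x : nat).
Proof. by rewrite -sum1_card big_mkcond; apply: eq_bigr => x _; rewrite inE; case: (P x). Qed.

Lemma card_pairs (T : finType) (P : T -> T -> bool) :
  #|[set p : T * T | P p.1 p.2]| = \sum_x #|[set y | P x y]|.
Proof.
rewrite (@card_sum _ (fun p : T * T => P p.1 p.2)).
rewrite -(pair_big xpredT xpredT (fun x y => (P x y : nat))) /=.
by apply: eq_bigr => x _; rewrite card_sum.
Qed.

Lemma perim_sum (S : {set site L}) :
  perim S = \sum_(x in S) #|[set y | (y \notin S) && adj x y]|.
Proof.
rewrite /perim (card_pairs (fun a b => (a \in S) && (b \in bdry S) && adj a b)).
rewrite (bigID (mem S)) /= [X in _ + X]big1 ?addn0.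
  apply: eq_bigr => x xS; apply: eq_card => y; rewrite !inE xS /=.
  case A: (adj x y); rewrite ?andbF ?andbT //.
  case: (y \in S) => //=; apply/existsP; exists x; by rewrite xS A.
move=> x xS; apply/eqP; rewrite cards_eq0; apply/eqP/setP => y; rewrite !inE.
by rewrite (negbTE xS).
Qed.

Lemma perim_mono (C : {set site L}) p : (forall x, x \in C -> par x = p) ->
  perim C = 4 * #|C|.
Proof.
move=> hC; rewrite perim_sum (eq_bigr (fun _ => 4)) ?sum_nat_const 1?mulnC //.
move=> x xC; rewrite -(card_nb x); apply: eq_card => y; rewrite !inE.
case A: (adj x y); rewrite ?andbF ?andbT //.
apply/negP => yC; have := par_adj A; rewrite (hC _ xC) (hC _ yC); by case: (p).
Qed.

Lemma perim_core (C : {set site L}) p : (forall x, x \in C -> par x = p) ->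
  perim (C :|: bdry C) = 4 * #|bdry C| - 4 * #|C|.
Proof.
move=> hC; set B := bdry C.
have hB : forall y, y \in B -> par y = ~~ p.
  move=> y; rewrite inE => /andP[_ /existsP[x /andP[xC A]]].
  by rewrite (par_adj A) (hC _ xC).
have dCB : [disjoint C & B].
  apply/pred0P => x /=; apply/negP => /andP[xC xB].
  by have := hB _ xB; rewrite (hC _ xC); case: (p).
have key : perim (C :|: B) + 4 * #|C| = 4 * #|B|.
  rewrite perim_sum (@eq_bigl _ _ _ _ _ _ [predU C & B]); last by move=> x; rewrite !inE.
  rewrite bigU //= big1 ?add0n; last first.
    move=> x xC; apply/eqP; rewrite cards_eq0; apply/eqP/setP => y; rewrite !inE.
    case A: (adj x y); rewrite ?andbF ?andbT //.
    case yC: (y \in C) => //=; apply/negbF.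
    by apply/existsP; exists x; rewrite xC A.
  have e1 : forall x, x \in B -> #|[set y | (y \notin C :|: B) && adj x y]| =
      #|[set y | adj x y]| - #|[set y | (y \in C) && adj x y]|.
    move=> x xB.
    rewrite -(cardsID C [set y | adj x y]).
    rewrite (_ : [set y | adj x y] :&: C = [set y | (y \in C) && adj x y]); last first.
      by apply/setP => y; rewrite !inE andbC.
    rewrite addKn; apply: eq_card => y; rewrite !inE.
    case A: (adj x y); rewrite ?andbF ?andbT //=.
    case yC: (y \in C) => //=; apply/negP => yB.
    have yB' : y \in B by rewrite inE yC yB.
    by have := par_adj A; rewrite (hB _ xB) (hB _ yB'); case: (p).
  rewrite (eq_bigr _ e1) (eq_bigr (fun x => 4 - #|[set y | (y \in C) && adj x y]|)); last first.
    by move=> x _; rewrite card_nb.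
  have le4 : forall x, #|[set y | (y \in C) && adj x y]| <= 4.
    move=> x; rewrite -(card_nb x); apply: subset_leq_card; apply/subsetP => y.
    by rewrite !inE => /andP[].
  have ex : \sum_(x in B) #|[set y | (y \in C) && adj x y]| = 4 * #|C|.
    transitivity (\sum_(x in B) \sum_y ((y \in C) && adj x y : nat)).
      by apply: eq_bigr => x _; rewrite card_sum.
    rewrite exchange_big /= (bigID (mem C)) /= [X in _ + X]big1 ?addn0; last first.
      by move=> y yC; apply: big1 => x _; rewrite (negbTE yC).
    rewrite mulnC -sum_nat_const; apply: eq_bigr => y yC.
    rewrite yC -(card_nb y) card_sum big_mkcond /=; apply: eq_bigr => x _.
    case A: (adj y x); last by case: (x \in B); rewrite //= adjC A.
    have xB : x \in B.
      rewrite inE; apply/andP; split; last by apply/existsP; exists y; rewrite yC A.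
      by apply/negP => xC; have := par_adj A; rewrite (hC _ xC) (hC _ yC); case: (p).
    by rewrite xB adjC A.
  rewrite -ex -big_split /= (eq_bigr (fun _ => 4)) ?sum_nat_const 1?mulnC //.
  by move=> x _; rewrite subnK // le4.
by rewrite -key addnK.
Qed.


Definition phi (e : site L) (k j : nat) : site L := mk (e.1 + k + j) (e.2 + k + (L - j)).

Lemma core_img a b (e : site L) :
  rhombus_core a b e = [set phi e (p.1 : nat) (p.2 : nat) | p : 'I_a * 'I_b].
Proof.
apply/setP => x; rewrite inE; apply/existsP/imsetP.
  case=> k /existsP [j /andP [/eqP h1 /eqP h2]]; exists (k, j) => //.
  by apply/site_eqP.
by case=> [[k j] _ ->]; exists k; apply/existsP; exists j; rewrite /= !eqxx.
Qed.

Lemma par_phi e k j : j <= L -> par (phi e k j) = par e.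
Proof.
move=> hj; rewrite /par /= oddD !odd_mod ?(negbTE Lev) // -oddD; lia.
Qed.

Lemma modDl_eq e u v : (e + u) %% L = (e + v) %% L -> u %% L = v %% L.
Proof. by move/eqP; rewrite eqn_modDl => /eqP. Qed.

Lemma cnt n c d : \sum_(i < n) ((c <= i) && (i < d) : nat) = minn d n - c.
Proof.
elim: n => [|n IH]; first by rewrite big_ord0; lia.
rewrite big_ord_recr /= IH; lia.
Qed.

Lemma cnt0 n d : \sum_(i < n) (i < d : nat) = minn d n.
Proof. by rewrite -[RHS]subn0 -cnt. Qed.

Definition hh := L %/ 2.

Definition red a b (p : 'I_a * 'I_b) := ((L %/ 2) <= p.1) && ((p.2 + (L %/ 2)) %% L < b).

Lemma core_nr_img a b (e : site L) : a <= L -> b <= L ->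
  rhombus_core a b e = (fun p : 'I_a * 'I_b => phi e p.1 p.2) @: [set p | ~~ red p].
Proof.
move=> ha hb.
have he1 := ltn_ord e.1; have he2 := ltn_ord e.2.
  rewrite core_img; apply/setP => x; apply/imsetP/imsetP; last first.
    by case=> p _ ->; exists p.
  case=> [[p1 p2]] _ ->.
  case rp: (red (p1, p2)); last by exists (p1, p2); rewrite // inE rp.
  move: rp; rewrite /red /= => /andP [r1 r2].
  have hp1 := ltn_ord p1; have hp2 := ltn_ord p2.
  have q1 : p1 - (L %/ 2) < a by lia.
  exists (Ordinal q1, Ordinal r2).
    rewrite inE /red /=; apply/nandP; left; rewrite -ltnNge; lia.
  apply/site_eqP; rewrite /=; split; elim_mods; lia.
Qed.

Lemma modE_lin0 A B t : A = B + t * L -> A %% L = B %% L.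
Proof. by move=> ->; rewrite addnC modnMDl. Qed.

Lemma mod2eq x y : x < 2 * L -> y < 2 * L -> x %% L = y %% L -> x = y \/ x = y + L \/ y = x + L.
Proof. move=> hx hy; elim_mods; lia. Qed.

Lemma modpair u v : u < L -> v < L -> (v = u + L %/ 2 \/ u = v + L %/ 2) -> (u + L %/ 2) %% L = v.
Proof.
move=> hu hv [E|E]; first by rewrite -E modn_small.
rewrite (@modE_lin0 _ v 1) ?modn_small //; lia.
Qed.

Lemma inj_arith p1 p2 q1 q2 : p1 < L -> p2 < L -> q1 < L -> q2 < L ->
  (p1 + p2) %% L = (q1 + q2) %% L -> (p1 + (L - p2)) %% L = (q1 + (L - q2)) %% L ->
  (p1 = q1 /\ p2 = q2) \/
   (p1 = q1 + L %/ 2 /\ (q2 = p2 + L %/ 2 \/ p2 = q2 + L %/ 2)) \/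
   (q1 = p1 + L %/ 2 /\ (p2 = q2 + L %/ 2 \/ q2 = p2 + L %/ 2)).
Proof.
move=> hp1 hp2 hq1 hq2.
have x1 : p1 + p2 < 2 * L by lia.
have x2 : q1 + q2 < 2 * L by lia.
have x3 : p1 + (L - p2) < 2 * L by lia.
have x4 : q1 + (L - q2) < 2 * L by lia.
move=> h1 h2; move: (mod2eq x1 x2 h1) (mod2eq x3 x4 h2); clear h1 h2.
case=> [E|[E|E]]; case=> [F|[F|F]]; lia.
Qed.

Lemma core_nr_inj a b (e : site L) : a <= L -> b <= L ->
  {in [set p | ~~ red p] &, injective (fun p : 'I_a * 'I_b => phi e p.1 p.2)}.
Proof.
move=> ha hb.
move=> [p1 p2] [q1 q2]; rewrite !inE /red /= => rp rq /site_eqP [] /=.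
rewrite -!addnA => /modDl_eq h1 /modDl_eq h2.
have hp1 := ltn_ord p1; have hp2 := ltn_ord p2; have hq1 := ltn_ord q1; have hq2 := ltn_ord q2.
have key := inj_arith (leq_trans hp1 ha) (leq_trans hp2 hb) (leq_trans hq1 ha) (leq_trans hq2 hb) h1 h2.
case: key => [[e1 e2]|[[E1 E2]|[E1 E2]]].
- by rewrite (val_inj e1) (val_inj e2).
- have := modpair (leq_trans hp2 hb) (leq_trans hq2 hb) E2 => M; rewrite M in rp.
  exfalso; move: rp; rewrite E1 (ltn_ord q2) andbT; clear -E1 hq1 Lev; lia.
- have := modpair (leq_trans hq2 hb) (leq_trans hp2 hb) E2 => M; rewrite M in rq.
  exfalso; move: rq; rewrite E1 (ltn_ord p2) andbT; clear -E1 hp1 Lev; lia.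
Qed.

Lemma card_red a b : a <= L -> b <= L ->
  #|[set p : 'I_a * 'I_b | red p]| = (a - (L %/ 2)) * (2 * (b - (L %/ 2))).
Proof.
move=> ha hb.
  rewrite (_ : [set p | red p] = setX [set k : 'I_a | (L %/ 2) <= k] [set j : 'I_b | (j + (L %/ 2)) %% L < b]); last first.
    by apply/setP => p; rewrite !inE.
  rewrite cardsX card_sum (eq_bigr (fun k : 'I_a => (((L %/ 2) <= k) && (k < a) : nat))); last first.
    by move=> k _; rewrite ltn_ord andbT.
  rewrite cnt card_sum (eq_bigr (fun j : 'I_b => (j < b - (L %/ 2) : nat) + (((L %/ 2) <= j) && (j < L)))); last first.
    move=> j _; have := ltn_ord j => ?; idtac; elim_mods; lia.
  rewrite big_split /= cnt0 cnt minnn.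
  have -> : minn (b - L %/ 2) b + (minn L b - L %/ 2) = 2 * (b - L %/ 2) by lia.
  by [].
Qed.

Lemma card_core a b (e : site L) : a <= L -> b <= L ->
  #|rhombus_core a b e| + (a - hh) * (2 * (b - hh)) = a * b.
Proof.
move=> ha hb; rewrite /hh.
rewrite (core_nr_img e ha hb) card_in_imset; last exact: core_nr_inj.
have cR := card_red ha hb.
have := cardsC [set p : 'I_a * 'I_b | red p]; rewrite card_prod !card_ord.
rewrite (_ : ~: [set p | red p] = [set p | ~~ red p]); last by apply/setP => p; rewrite !inE.
lia.
Qed.

Lemma modE_lin A B t : A = B + t * L -> A %% L = B %% L.
Proof. by move=> ->; rewrite addnC modnMDl. Qed.

Ltac modeq := rewrite -?addnA ?modnDml ?modn_mod;
  first [ apply: (@modE_lin _ _ 0); lia | apply: (@modE_lin _ _ 1); lia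
        | apply: (@modE_lin _ _ 2); lia | apply: (@modE_lin _ _ 3); lia
        | apply: esym; apply: (@modE_lin _ _ 1); lia | apply: esym; apply: (@modE_lin _ _ 2); lia
        | apply: esym; apply: (@modE_lin _ _ 3); lia ].

Lemma core_succL b (e : site L) : b <= L -> rhombus_core L.+1 b e = rhombus_core L b e.
Proof.
move=> hb.
have he1 := ltn_ord e.1; have he2 := ltn_ord e.2.
apply/setP => x; rewrite !core_img; apply/imsetP/imsetP.
  case=> [[k j]] _ ->; exists (Ordinal (ltn_pmod k Lpos), j) => //.
  have := ltn_ord k => ?; have := ltn_ord j => ?; apply/site_eqP; split => /=; elim_mods; lia.
by case=> [[k j]] _ ->; exists (widen_ord (leqnSn L) k, j).
Qed.

Lemma core_succR a (e : site L) : a <= L.+1 -> rhombus_core a L.+1 e = rhombus_core a L e.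
Proof.
move=> ha.
have he1 := ltn_ord e.1; have he2 := ltn_ord e.2.
apply/setP => x; rewrite !core_img; apply/imsetP/imsetP.
  case=> [[k j]] _ ->; exists (k, Ordinal (ltn_pmod j Lpos)) => //.
  have := ltn_ord j => ?; have := ltn_ord k => ?; apply/site_eqP; split => /=; elim_mods; lia.
by case=> [[k j]] _ ->; exists (k, widen_ord (leqnSn L) j).
Qed.

End Torus.


Section Torus2.
Variable L : nat.
Hypothesis L3 : 3 <= L.
Hypothesis Lev : ~~ odd L.

Local Notation mk := (mk L3 Lev).
Local Notation phi := (phi L3 Lev).
Local Notation nb1 := (nb1 L3 Lev).
Local Notation nb2 := (nb2 L3 Lev).
Local Notation nb3 := (nb3 L3 Lev).
Local Notation nb4 := (nb4 L3 Lev).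

Ltac elim_mods2 := repeat match goal with |- context [?X %% L] =>
  lazymatch X with context [_ %% L] => fail | _ => idtac end;
  first [ rewrite (@modn_small X L); last by lia
        | case: (@modL2 L L3 Lev X ltac:(lia)) => [[-> ?]|[-> ?]]
        | case: (@modL3 L L3 Lev X ltac:(lia)) => [[-> ?]|[[-> ?]|[-> ?]]]
        | case: (@modL4 L L3 Lev X ltac:(lia)) => [[-> ?]|[[-> ?]|[[-> ?]|[-> ?]]]] ] end.

Ltac modeq2 := rewrite -?addnA ?modnDml ?modn_mod;
  first [ apply: (@modE_lin L _ _ 0); lia | apply: (@modE_lin L _ _ 1); lia
        | apply: (@modE_lin L _ _ 2); lia | apply: (@modE_lin L _ _ 3); lia
        | apply: esym; apply: (@modE_lin L _ _ 1); lia | apply: esym; apply: (@modE_lin L _ _ 2); lia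
        | apply: esym; apply: (@modE_lin L _ _ 3); lia ].

Lemma bdry_core l1 l2 (e : site L) : 0 < l1 -> 0 < l2 -> l1 <= L -> l2 <= L ->
  bdry (rhombus_core l1 l2 e) = rhombus_core l1.+1 l2.+1 (mk (e.1 + (L - 1)) e.2).
Proof.
move=> p1 p2 hl1 hl2.
have he1 := ltn_ord e.1; have he2 := ltn_ord e.2.
apply/setP => y; rewrite inE [in RHS](core_img L3 Lev).
apply/andP/imsetP.
  case=> yC /existsP [x /andP [xC A]].
  move: xC; rewrite (core_img L3 Lev) => /imsetP [[k j] _ xE]; subst x.
  have hk := ltn_ord k; have hj := ltn_ord j.
  have k1 : k.+1 < l1.+1 by rewrite ltnS.
  have j1 : j.+1 < l2.+1 by rewrite ltnS.
  have k0 : (k : nat) < l1.+1 by lia.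
  have j0 : (j : nat) < l2.+1 by lia.
  move: A; rewrite (adjE L3 Lev) !inE => /or4P [] /eqP ->.
  - by exists (Ordinal k1, Ordinal j1) => //; apply/site_eqP; split => /=; modeq2.
  - by exists (Ordinal k0, Ordinal j0) => //; apply/site_eqP; split => /=; modeq2.
  - by exists (Ordinal k1, Ordinal j0) => //; apply/site_eqP; split => /=; modeq2.
  - by exists (Ordinal k0, Ordinal j1) => //; apply/site_eqP; split => /=; modeq2.
case=> [[k j]] _ ->.
have hk := ltn_ord k; have hj := ltn_ord j.
split.
  apply/negP; rewrite (core_img L3 Lev) => /imsetP [[k' j'] _ E].
  have hj' := ltn_ord j'.
  have hjL : (j : nat) <= L by lia.
  have hjL' : (j' : nat) <= L by lia.
  have := par_phi L3 Lev (mk (e.1 + (L-1)) e.2) k hjL.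
  rewrite E (par_phi L3 Lev _ _ hjL').
  rewrite /par /=; elim_mods2; lia.
apply/existsP.
case: (ltnP k l1) => hk'; case: (ltnP j l2) => hj'.
- exists (phi e k j); apply/andP; split.
    by rewrite (core_img L3 Lev); apply/imsetP; exists (Ordinal hk', Ordinal hj').
  rewrite (adjE L3 Lev) !inE; apply/or4P; apply: Or42; apply/eqP/site_eqP; split => /=; modeq2.
- have j1 : j.-1 < l2 by lia.
  exists (phi e k j.-1); apply/andP; split.
    by rewrite (core_img L3 Lev); apply/imsetP; exists (Ordinal hk', Ordinal j1).
  rewrite (adjE L3 Lev) !inE; apply/or4P; apply: Or44; apply/eqP/site_eqP; split => /=; modeq2.
- have k1 : k.-1 < l1 by lia.
  exists (phi e k.-1 j); apply/andP; split.
    by rewrite (core_img L3 Lev); apply/imsetP; exists (Ordinal k1, Ordinal hj').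
  rewrite (adjE L3 Lev) !inE; apply/or4P; apply: Or43; apply/eqP/site_eqP; split => /=; modeq2.
- have j1 : j.-1 < l2 by lia.
  have k1 : k.-1 < l1 by lia.
  exists (phi e k.-1 j.-1); apply/andP; split.
    by rewrite (core_img L3 Lev); apply/imsetP; exists (Ordinal k1, Ordinal j1).
  rewrite (adjE L3 Lev) !inE; apply/or4P; apply: Or41; apply/eqP/site_eqP; split => /=; modeq2.
Qed.


Lemma card_core' a b (e : site L) : a <= L.+1 -> b <= L.+1 ->
  #|rhombus_core a b e| + (minn a L - L %/ 2) * (2 * (minn b L - L %/ 2)) = minn a L * minn b L.
Proof.
move=> ha hb.
have Hb : rhombus_core a b e = rhombus_core a (minn b L) e.
  case: (leqP b L) => hb' //.
  have -> : b = L.+1 by lia.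
  by rewrite (core_succR L3 Lev).
have Ha : rhombus_core a (minn b L) e = rhombus_core (minn a L) (minn b L) e.
  case: (leqP a L) => ha' //.
  have -> : a = L.+1 by lia.
  by rewrite (core_succL L3 Lev) ?geq_minr.
by rewrite Hb Ha (card_core L3 Lev) ?geq_minr.
Qed.

Lemma core_mono a b (e : site L) : b <= L.+1 ->
  forall x, x \in rhombus_core a b e -> par x = par e.
Proof.
move=> hb x; rewrite (core_img L3 Lev) => /imsetP [[k j] _ ->].
have hj : (j : nat) <= L by have := ltn_ord j; lia.
exact: (par_phi L3 Lev _ _ hj).
Qed.

Lemma line2 l2 (e : site L) :
  [set x : site L | [exists j : 'I_l2.+1, ((x.1 : nat) == (e.1 + j) %% L) &&
     ((x.2 : nat) == (e.2 + (L - j)) %% L)]] = rhombus_core 1 l2.+1 e.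
Proof.
apply/setP => x; rewrite !inE; apply/existsP/existsP.
  by case=> j H; exists ord0; apply/existsP; exists j; rewrite /= !addn0.
by case=> k /existsP [j]; rewrite (ord1 k) /= !addn0 => H; exists j.
Qed.

Lemma line1 l1 (e : site L) :
  [set x : site L | [exists k : 'I_l1.+1, ((x.1 : nat) == (e.1 + k) %% L) &&
     ((x.2 : nat) == (e.2 + k) %% L)]] = rhombus_core l1.+1 1 e.
Proof.
apply/setP => x; rewrite !inE; apply/existsP/existsP.
  by case=> k H; exists k; apply/existsP; exists ord0; rewrite /= addn0 subn0 modnDr.
by case=> k /existsP [j]; rewrite (ord1 j) /= addn0 subn0 modnDr => H; exists k.
Qed.

End Torus2.

Lemma final_arith L l1 l2 N1 N0 : 6 <= L -> ~~ odd L -> 0 < l1 -> 0 < l2 -> l1 <= L -> l2 <= L ->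
 N1 + (minn l1.+1 L - L %/ 2) * (2 * (minn l2.+1 L - L %/ 2)) = minn l1.+1 L * minn l2.+1 L ->
 N0 + (l1 - L %/ 2) * (2 * (l2 - L %/ 2)) = l1 * l2 ->
 4 * N1 - 4 * N0 = 4 * (if maxn l1 l2 < L then
         (if minn l1 l2 < L %/ 2 then l1 + l2 + 1 else 2 * L - (l1 + l2 + 1))
       else
         (if minn l1 l2 < L %/ 2 then L else 0)).
Proof.
move=> L6 Lev p1 p2 hl1 hl2 H1 H0.
have [h hL] : exists h, L = 2 * h by exists (L %/ 2); lia.
subst L; have hd : 2 * h %/ 2 = h by lia.
rewrite hd in H1 H0 *.
have fin : forall a b, minn a (2 * h) - h = b -> minn a (2 * h) - h = b by [].
case: (ltnP l1 h) => c1; last case: (ltnP l1 (2 * h)) => c1'.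
- have E1 : minn l1.+1 (2*h) = l1.+1 by lia.
  have E2 : l1.+1 - h = 0 by lia.
  have E3 : l1 - h = 0 by lia.
  rewrite E1 E2 E3 in H1 H0.
  case: (ltnP l2 h) => c2; last case: (ltnP l2 (2 * h)) => c2'.
  + have F1 : minn l2.+1 (2*h) = l2.+1 by lia.
    have F2 : l2.+1 - h = 0 by lia.
    have F3 : l2 - h = 0 by lia.
    rewrite F1 F2 F3 in H1 H0.
    repeat (case: ifP => ?); lia.
  + have [v ev] : exists v, l2 = h + v by exists (l2 - h); lia.
    subst l2.
    have F1 : minn (h + v).+1 (2*h) = (h + v).+1 by lia.
    have F2 : (h + v).+1 - h = v.+1 by lia.
    have F3 : h + v - h = v by lia.
    rewrite F1 F2 F3 in H1 H0.
    repeat (case: ifP => ?); lia.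
  + have ev : l2 = 2 * h by lia.
    subst l2.
    have F1 : minn (2 * h).+1 (2*h) = 2 * h by lia.
    have F2 : 2 * h - h = h by lia.
    rewrite F1 F2 in H1 H0.
    repeat (case: ifP => ?); lia.
- have [u eu] : exists u, l1 = h + u by exists (l1 - h); lia.
  subst l1.
  have E1 : minn (h + u).+1 (2*h) = (h + u).+1 by lia.
  have E2 : (h + u).+1 - h = u.+1 by lia.
  have E3 : h + u - h = u by lia.
  rewrite E1 E2 E3 in H1 H0.
  case: (ltnP l2 h) => c2; last case: (ltnP l2 (2 * h)) => c2'.
  + have F1 : minn l2.+1 (2*h) = l2.+1 by lia.
    have F2 : l2.+1 - h = 0 by lia.
    have F3 : l2 - h = 0 by lia.
    rewrite F1 F2 F3 in H1 H0.
    repeat (case: ifP => ?); lia.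
  + have [v ev] : exists v, l2 = h + v by exists (l2 - h); lia.
    subst l2.
    have F1 : minn (h + v).+1 (2*h) = (h + v).+1 by lia.
    have F2 : (h + v).+1 - h = v.+1 by lia.
    have F3 : h + v - h = v by lia.
    rewrite F1 F2 F3 in H1 H0.
    repeat (case: ifP => ?); lia.
  + have ev : l2 = 2 * h by lia.
    subst l2.
    have F1 : minn (2 * h).+1 (2*h) = 2 * h by lia.
    have F2 : 2 * h - h = h by lia.
    rewrite F1 F2 in H1 H0.
    repeat (case: ifP => ?); lia.
- have eu : l1 = 2 * h by lia.
  subst l1.
  have E1 : minn (2 * h).+1 (2*h) = 2 * h by lia.
  have E2 : 2 * h - h = h by lia.
  rewrite E1 E2 in H1 H0.
  case: (ltnP l2 h) => c2; last case: (ltnP l2 (2 * h)) => c2'.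
  + have F1 : minn l2.+1 (2*h) = l2.+1 by lia.
    have F2 : l2.+1 - h = 0 by lia.
    have F3 : l2 - h = 0 by lia.
    rewrite F1 F2 F3 in H1 H0.
    repeat (case: ifP => ?); lia.
  + have [v ev] : exists v, l2 = h + v by exists (l2 - h); lia.
    subst l2.
    have F1 : minn (h + v).+1 (2*h) = (h + v).+1 by lia.
    have F2 : (h + v).+1 - h = v.+1 by lia.
    have F3 : h + v - h = v by lia.
    rewrite F1 F2 F3 in H1 H0.
    repeat (case: ifP => ?); lia.
  + have ev : l2 = 2 * h by lia.
    subst l2.
    have F1 : minn (2 * h).+1 (2*h) = 2 * h by lia.
    have F2 : 2 * h - h = h by lia.
    rewrite F1 F2 in H1 H0.
    repeat (case: ifP => ?); lia.
Qed.

Theorem proposition3p3 (L : nat) (hL6 : 6 <= L) (hLeven : ~~ odd L)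
  (l1 l2 : nat) (h1 : l1 <= L) (h2 : l2 <= L) (eta : site L)
  (heta : if (0 < l1) && (0 < l2) then is_odd_site eta else is_even_site eta) :
  perim (rhombus l1 l2 eta) =
  4 * (if maxn l1 l2 < L then
         (if minn l1 l2 < L %/ 2 then l1 + l2 + 1 else 2 * L - (l1 + l2 + 1))
       else
         (if minn l1 l2 < L %/ 2 then L else 0)).
Proof.
have L3 : 3 <= L by lia.
rewrite /rhombus.
case: (posnP l1) => [l1z | l1p]; case: (posnP l2) => [l2z | l2p].
- subst l1 l2 => /=.
  rewrite (perim_mono L3 hLeven (p := par eta)) ?cards1; last by move=> x; rewrite inE => /eqP ->.
  by repeat (case: ifP => ?); lia.
- subst l1 => /=.
  case: l2 l2p h2 heta => [//|l2] _ h2 _.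
  rewrite line2 (perim_mono L3 hLeven (p := par eta)); last by apply: core_mono; lia.
  have b1 : 1 <= L.+1 by lia.
  have b2 : l2.+2 <= L.+1 by lia.
  have C := card_core' L3 hLeven eta b1 b2.
  have e1 : minn 1 L = 1 by lia.
  have e2 : 1 - L %/ 2 = 0 by lia.
  rewrite e1 e2 mul0n addn0 mul1n in C; rewrite C.
  by repeat (case: ifP => ?); lia.
- subst l2 => /=.
  case: l1 l1p h1 heta => [//|l1] _ h1 _.
  rewrite line1 (perim_mono L3 hLeven (p := par eta)); last by apply: core_mono; lia.
  have b1 : 1 <= L.+1 by lia.
  have b2 : l1.+2 <= L.+1 by lia.
  have C := card_core' L3 hLeven eta b2 b1.
  have e1 : minn 1 L = 1 by lia.
  have e2 : 1 - L %/ 2 = 0 by lia.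
  rewrite e1 e2 muln0 muln0 addn0 muln1 in C; rewrite C.
  by repeat (case: ifP => ?); lia.
- rewrite /=.
  rewrite (perim_core L3 hLeven (p := par eta)); last by apply: core_mono; lia.
  rewrite (bdry_core L3 hLeven) //.
  have b1 : l1.+1 <= L.+1 by lia.
  have b2 : l2.+1 <= L.+1 by lia.
  have b3 : l1 <= L.+1 by lia.
  have b4 : l2 <= L.+1 by lia.
  have C1 := card_core' L3 hLeven (mk L3 hLeven (eta.1 + (L-1)) eta.2) b1 b2.
  have C0 := card_core' L3 hLeven eta b3 b4.
  have e1 : minn l1 L = l1 by lia.
  have e2 : minn l2 L = l2 by lia.
  rewrite e1 e2 in C0.
  exact: (final_arith hL6 hLeven l1p l2p h1 h2 C1 C0).
Qed.
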